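(* Let $A\subset\Pi$, $\alpha_i\in\Pi\setminus A$ and $\epsilon=(\epsilon_1,\dots,\epsilon_l)\in\mathcal E^A$. (a) If $\epsilon_i=1$ then $s_{\alpha_i}h_\epsilon=h_\epsilon$. If $\epsilon_i=-1$ then $s_{\alpha_i}h_\epsilon=h_{\epsilon'}$ with $\epsilon'_j=\epsilon_j\epsilon_i^{-C_{j,i}}$; moreover $h_{\epsilon'}$ factors as $h_{\epsilon'}=\big(\prod_{\alpha_j\in A,\ C_{j,i}\text{ odd}}h_j\big)h_{\epsilon_A}$ for some $\epsilon_A\in\mathcal E^A$. (b) If $\epsilon_i=1$ then $s_{\alpha_i}(h_\epsilon H^A)\subset h_\epsilon H^A$. If $\epsilon_i=-1$ then $s_{\alpha_i}(h_\epsilon H^A)\subset h_{\epsilon'}H^A$ with $\epsilon'$ as in (a), and $h_{\epsilon'}$ factors as in (a). (c) For every $k$, every $h\in H_\epsilon:=h_\epsilon H$ and every $h'\in s_{\alpha_i}(H_\epsilon)$, the sign $\epsilon_k$ of $\chi_{\alpha_k}(h)$ equals the sign of $\chi_{s_{\alpha_i}\alpha_k}(h')$.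
   Context: $\mathfrak g$ is a real split semisimple Lie algebra of rank $l$, $\mathfrak h$ a split Cartan subalgebra, $\Pi=\{\alpha_1,\dots,\alpha_l\}$ simple roots, $h_{\alpha_j}$ coroots, $C_{i,j}=\alpha_i(h_{\alpha_j})$. $G_{\mathbb C}$ is the connected adjoint group of $\mathfrak g\otimes\mathbb C$, $H_{\mathbb C}$ its Cartan subgroup with Lie algebra $\mathfrak h\otimes\mathbb C$, $\tilde G=\{g\in G_{\mathbb C}:\mathrm{Ad}(g)\mathfrak g\subset\mathfrak g\}$, $H_{\mathbb R}=H_{\mathbb C}\cap\tilde G$, $H=\exp\mathfrak h$, and $\chi_\phi$ denotes the root character of $\phi$ ($\mathrm{Ad}(h)e_\phi=\chi_\phi(h)e_\phi$), real and nonzero on $H_{\mathbb R}$. Let $y_i\in\mathfrak h$ with $\alpha_j(y_i)=\pi\delta_{ij}$, $h_i=\exp(\sqrt{-1}y_i)$, $h_\epsilon=\prod_{i:\epsilon_i=-1}h_i$ for $\epsilon\in\{\pm1\}^l$. For $A\subset\Pi$: $\mathcal E^A=\{\epsilon\in\{\pm1\}^l:\epsilon_j=1\text{ whenever }\alpha_j\in A\}$, and $H^A=\exp(\mathfrak h^A)$ with $\mathfrak h^A$ the real span of $h_{\alpha_j}$, $\alpha_j\notin A$. The Weyl group acts on $H_{\mathbb R}$ by conjugation by normalizer representatives. *)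

(* Defs.v *)
(* Coordinate model of the real points of the Cartan subgroup of the adjoint *)
(* group: an element h of H_C is determined by the values chi_{alpha_j}(h)   *)
(* of the simple root characters (H_C = Hom(root lattice, C^x) for the        *)
(* adjoint group); H_R is the set of h with all these values real nonzero,   *)
(* so elements of H_R are modelled as functions 'I_l -> R.                   *)
From mathcomp Require Import all_boot all_order all_algebra.
From mathcomp Require Import reals.
From mathcomp.analysis Require Import sequences.
Set Implicit Arguments. Unset Strict Implicit. Unset Printing Implicit Defensive.
Import Order.TTheory GRing.Theory Num.Theory.
Local Open Scope ring_scope.

(* C i j = alpha_i (h_{alpha_j}) : the Cartan matrix of a real split       *)
(* semisimple Lie algebra of rank l, w.r.t. the simple roots Pi.           *)
Definition is_cartan (R : realType) (l : nat) (C : 'M[int]_l) : Prop :=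
  (forall i, C i i = 2) /\
  (forall i j, i != j -> C i j <= 0) /\
  (forall i j, (C i j == 0) = (C j i == 0)) /\
  exists d : 'I_l -> R, (forall i, 0 < d i) /\
    (forall i j, (C i j)%:~R * d j = (C j i)%:~R * d i) /\
    (forall v : 'I_l -> R, (exists i, v i != 0) ->
       0 < \sum_i \sum_j v i * (C i j)%:~R * d j * v j).

Definition tmul (R : realType) (l : nat) (t u : 'I_l -> R) : 'I_l -> R :=
  fun j => t j * u j.

(* chi_phi(h) for phi = sum_j n_j alpha_j *)
Definition chi (R : realType) (l : nat) (n : 'I_l -> int) (t : 'I_l -> R) : R :=
  \prod_(j < l) t j ^ n j.

Definition sroot (l : nat) (k : 'I_l) : 'I_l -> int :=
  fun j => if j == k then 1 else 0.

(* s_{alpha_i} beta = beta - beta(h_{alpha_i}) alpha_i, on coefficient vectors *)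
Definition srefl (l : nat) (C : 'M[int]_l) (i : 'I_l) (n : 'I_l -> int)
  : 'I_l -> int :=
  fun j => n j - (if j == i then \sum_(m < l) n m * C m i else 0).

(* action of s_{alpha_i} on H_R by conjugation with a normalizer           *)
(* representative: chi_phi(s.h) = chi_{s^{-1} phi}(h) = chi_{s phi}(h)     *)
Definition wact (R : realType) (l : nat) (C : 'M[int]_l) (i : 'I_l)
  (t : 'I_l -> R) : 'I_l -> R :=
  fun j => chi (srefl C i (sroot j)) t.

(* h_i = exp(sqrt(-1) y_i), alpha_j(y_i) = pi delta_ij :                    *)
(* chi_{alpha_j}(h_i) = exp(sqrt(-1) pi delta_ij)                          *)
Definition hgen (R : realType) (l : nat) (i : 'I_l) : 'I_l -> R :=
  fun j => if j == i then -1 else 1.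

Definition h_eps (R : realType) (l : nat) (eps : 'I_l -> R) : 'I_l -> R :=
  fun k => \prod_(i < l | eps i == -1) hgen R i k.

Definition in_EA (R : realType) (l : nat) (A : {set 'I_l}) (eps : 'I_l -> R)
  : Prop :=
  (forall j, eps j = 1 \/ eps j = -1) /\ (forall j, j \in A -> eps j = 1).

(* H^A = exp(h^A), h^A = real span of h_{alpha_j}, alpha_j notin A;        *)
(* chi_{alpha_k}(exp(sum_j c_j h_{alpha_j})) = exp(sum_j c_j C_{k,j}).      *)
Definition HA (R : realType) (l : nat) (C : 'M[int]_l) (A : {set 'I_l})
  (t : 'I_l -> R) : Prop :=
  exists c : 'I_l -> R, (forall j, j \in A -> c j = 0) /\
    t = (fun k => expR (\sum_(j < l) c j * (C k j)%:~R)).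

Definition Hexp (R : realType) (l : nat) (C : 'M[int]_l) (t : 'I_l -> R) : Prop :=
  HA C set0 t.

Definition in_coset (R : realType) (l : nat) (x : 'I_l -> R)
  (S : ('I_l -> R) -> Prop) (y : 'I_l -> R) : Prop :=
  exists z, S z /\ y = tmul x z.

(* Main.v *)
Require Import Defs.
From mathcomp Require Import all_boot all_order all_algebra.
From mathcomp Require Import reals boolp.
From mathcomp.analysis Require Import sequences exp.
Import Order.TTheory GRing.Theory Num.Theory.
Local Open Scope ring_scope.

Lemma expRMz (R : realType) (n : int) (x : R) : expR (n%:~R * x) = expR x ^ n.
Proof.
case: n => m.
  by rewrite -pmulrn expRM_natl.
by rewrite NegzE mulNr expRN expRM_natl -exprnN.
Qed.

Lemma prod_single (R : realType) l (t : 'I_l -> R) (j : 'I_l) (e : int) :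
  \prod_m t m ^ (if m == j then e else 0) = t j ^ e.
Proof.
rewrite (bigD1 j) //= eqxx big1 ?mulr1 // => m /negbTE -> ; exact: expr0z.
Qed.

Lemma srefl_sroot l (C : 'M[int]_l) i j m :
  srefl C i (sroot j) m = (if m == j then 1 else 0) + (if m == i then - C j i else 0).
Proof.
rewrite /srefl /sroot; congr (_ + _).
case: (m == i) => //.
rewrite (bigD1 j) //= eqxx mul1r big1 ?addr0 // => k /negbTE ->; by rewrite mul0r.
Qed.

Lemma chi_srefl (R : realType) l (C : 'M[int]_l) i j (t : 'I_l -> R) :
  (forall m, t m != 0) ->
  chi (srefl C i (sroot j)) t = t j * t i ^ (- C j i).
Proof.
move=> nz; rewrite /chi.
under eq_bigr => m _ do rewrite srefl_sroot expfzDr //.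
by rewrite big_split /= !prod_single expr1z.
Qed.

Lemma chi_sroot (R : realType) l k (t : 'I_l -> R) : chi (sroot k) t = t k.
Proof. by rewrite /chi /sroot prod_single expr1z. Qed.

Lemma wactE (R : realType) l (C : 'M[int]_l) i (t : 'I_l -> R) j :
  (forall m, t m != 0) -> wact C i t j = t j * t i ^ (- C j i).
Proof. by move=> nz; rewrite /wact chi_srefl. Qed.

Lemma h_epsE (R : realType) l (eps : 'I_l -> R) k :
  h_eps eps k = if eps k == -1 then -1 else 1.
Proof.
rewrite /h_eps /hgen; case: ifP => e.
  rewrite (bigD1 k) //= eqxx big1 ?mulr1 // => m /andP [_ /negbTE].
  by rewrite eq_sym => ->.
apply: big1 => m em; case: eqP => // km; by rewrite -km e in em.
Qed.

Lemma pm1 (R : realType) (e : R) : e = 1 \/ e = -1 -> (if e == -1 then -1 else 1) = e.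
Proof.
case=> ->; rewrite ?eqxx //.
by case: eqP.
Qed.

Lemma pm1_pow (R : realType) (e : R) (n : int) : e = 1 \/ e = -1 -> e ^ n = 1 \/ e ^ n = -1.
Proof.
case=> ->; first by left; rewrite exp1rz.
rewrite expN1r -signr_odd; case: (odd `|n|%N); [right|left]; by rewrite ?expr1 ?expr0.
Qed.

Theorem proposition2p2p4 (R : realType) (l : nat) (C : 'M[int]_l)
  (A : {set 'I_l}) (i : 'I_l) (eps : 'I_l -> R) :
  is_cartan R C -> i \notin A -> in_EA A eps ->
  let eps' := fun j => eps j * eps i ^ (- C j i) in
  (* (a) *)
  ((eps i = 1 -> wact C i (h_eps eps) = h_eps eps) /\
   (eps i = -1 ->
      wact C i (h_eps eps) = h_eps eps' /\
      exists epsA, in_EA A epsA /\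
        h_eps eps' =
          tmul (fun k => \prod_(j < l | (j \in A) && odd `|C j i|%N) hgen R j k)
               (h_eps epsA))) /\
  (* (b) *)
  ((eps i = 1 -> forall x, in_coset (h_eps eps) (HA C A) x ->
                   in_coset (h_eps eps) (HA C A) (wact C i x)) /\
   (eps i = -1 -> forall x, in_coset (h_eps eps) (HA C A) x ->
                   in_coset (h_eps eps') (HA C A) (wact C i x))) /\
  (* (c) *)
  (forall (k : 'I_l) (h h' : 'I_l -> R),
     in_coset (h_eps eps) (Hexp C) h ->
     (exists z, in_coset (h_eps eps) (Hexp C) z /\ h' = wact C i z) ->
     Num.sg (chi (sroot k) h) = eps k /\
     Num.sg (chi (srefl C i (sroot k)) h') = eps k).
Proof.
move=> [Cii _] iA [epspm epsA] eps'.
have hE : forall e : 'I_l -> R, (forall j, e j = 1 \/ e j = -1) -> h_eps e = e.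
  by move=> e pm; apply/funext => k; rewrite h_epsE pm1.
have heps := hE _ epspm.
have eps'pm : forall j, eps' j = 1 \/ eps' j = -1.
  move=> j; rewrite /eps'; case: (pm1_pow _ _ (- C j i) (epspm i)) => ->; rewrite ?mulr1;
  case: (epspm j) => ->; rewrite ?mul1r ?mulrN1 ?mulN1r ?opprK; auto.
have heps' := hE _ eps'pm.
have pmnz : forall e : R, e = 1 \/ e = -1 -> e != 0.
  by move=> e [] ->; rewrite ?oppr_eq0 oner_eq0.
have epsnz : forall m, eps m != 0 by move=> m; apply: pmnz.
have wepsE : wact C i (h_eps eps) = eps'.
  by apply/funext => j; rewrite heps wactE.
have eps'1 : eps i = 1 -> eps' = eps.
  by move=> e1; apply/funext => j; rewrite /eps' e1 exp1rz mulr1.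
have bgen : forall x, in_coset (h_eps eps) (HA C A) x ->
                   in_coset (h_eps eps') (HA C A) (wact C i x).
  move=> x [z [[c [c0 ->]] ->]].
  set S := fun k => \sum_(j < l) c j * (C k j)%:~R.
  exists (fun k => expR (\sum_(j < l) (c j - (if j == i then S i else 0)) * (C k j)%:~R)).
  split.
    exists (fun j => c j - (if j == i then S i else 0)); split => // j jA.
    rewrite c0 //; case: eqP => [ji|]; last by rewrite subr0.
    by move: iA; rewrite -ji jA.
  apply/funext => j; rewrite heps' wactE; last first.
    by move=> m; rewrite /tmul heps mulf_neq0 // gt_eqF // expR_gt0.
  rewrite /tmul heps expfzMl mulrACA; congr (_ * _).
  rewrite -expRMz -expRD; congr expR.
  under [RHS]eq_bigr => m _ do rewrite mulrBl.
  rewrite sumrB; congr (_ + _).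
  have E : \sum_(m < l) (if m == i then S i else 0) * (C j m)%:~R = S i * (C j i)%:~R.
    by rewrite (bigD1 i) //= eqxx big1 ?addr0 // => m /negbTE ->; rewrite mul0r.
  rewrite E.
  by rewrite mulrC rmorphN mulrN.
split.
  split; first by move=> e1; rewrite wepsE heps eps'1.
  move=> em1; split; first by rewrite wepsE heps'.
  exists (fun k => if k \in A then 1 else eps' k); split.
    split; first by move=> j; case: ifP => _; auto.
    by move=> j ->.
  apply/funext => k; rewrite heps'; last first.
  rewrite hE; last by move=> j; case: ifP => _; auto.
  rewrite /tmul.
  have -> : \prod_(j in A | odd `|C j i|) hgen R j k =
            if (k \in A) && odd `|C k i| then -1 else 1.
    rewrite /hgen; case: ifP => e.
      rewrite (bigD1 k) //= eqxx big1 ?mulr1 // => m /andP [_ /negbTE].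
      by rewrite eq_sym => ->.
    apply: big1 => m em; case: eqP => // km; by rewrite -km e in em.
  case kA: (k \in A) => /=; last by rewrite mul1r.
  rewrite mulr1 /eps' epsA // em1 mul1r expN1r abszN -signr_odd.
  by case: (odd _); rewrite ?expr1 ?expr0.
split; first by split => // e1; rewrite -{2}(eps'1 e1); apply: bgen.
move=> k h h' [z [[c [_ ->]] ->]] [z0 [[y [[d [_ Hy]] ->]] ->]].
have ypos : forall m, 0 < y m by move=> m; rewrite Hy expR_gt0.
have sgeps : Num.sg (eps k) = eps k by case: (epspm k) => ->; rewrite ?sgr1 ?sgrN1.
set w := tmul (h_eps eps) y.
have wk : w k = eps k * y k by rewrite /w /tmul heps.
have wnz : forall m, w m != 0.
  by move=> m; rewrite /w /tmul heps mulf_neq0 // gt_eqF.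
split.
  by rewrite chi_sroot /tmul heps sgrM sgeps gtr0_sg ?expR_gt0 // mulr1.
rewrite chi_srefl; last by move=> m; rewrite wactE // mulf_neq0 // expfz_neq0.
rewrite !wactE // Cii.
have key : w i * w i ^ (- 2%:Z) = w i ^ (-1) by rewrite -{1}(expr1z (w i)) -expfzDr.
rewrite key exprz_exp mulN1r opprK -mulrA -expfzDr // addNr expr0z mulr1.
by rewrite wk sgrM sgeps gtr0_sg // mulr1.
Qed.
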